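(* Let $f:\{0,1\}^n\to\{0,1\}$ be $\varepsilon$-far from every $k$-junta. Then the unitary $U_f=\mathrm{diag}\big((-1)^{f(x)}\big)_{x\in\{0,1\}^n}$ is $\sqrt{\varepsilon/2}$-far from every quantum $k$-junta, i.e. $\mathrm{dist}(U_f,V)\ge\sqrt{\varepsilon/2}$ for every quantum $k$-junta $V\in\mathcal{U}_N$.
   Context: $N=2^n$, $\mathcal{U}_N$ is the set of $N\times N$ unitaries. A Boolean function is a $k$-junta if it depends on at most... precisely: $f(x)=g(x_{i_1},\dots,x_{i_k})$ for some $g:\{0,1\}^k\to\{0,1\}$ and fixed indices; $f$ is $\varepsilon$-far from every $k$-junta if $\Pr_{x\sim\{0,1\}^n}[f(x)\ne g(x)]\ge\varepsilon$ for every $k$-junta $g$ ($x$ uniform). A unitary $U\in\mathcal{U}_N$ is a quantum $k$-junta if $U=V_S\otimes I_{\overline{S}}$ for some $S\subseteq[n]$ with $|S|=k$ and $V_S\in\mathcal{U}_{2^k}$ acting on the qubits in $S$. For $A,B\in\mathbb{C}^{N\times N}$, $\mathrm{dist}(A,B):=\min_{\theta\in[0,2\pi)}\frac{1}{\sqrt{2N}}\|e^{i\theta}A-B\|$ with $\|\cdot\|$ the Frobenius norm. *)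

(* Defs.v *)
From HB Require Import structures.
From mathcomp Require Import all_boot all_order all_algebra.
From mathcomp Require Import all_classical all_reals all_analysis.
From mathcomp Require Import complex.
Set Implicit Arguments. Unset Strict Implicit. Unset Printing Implicit Defensive.
Import Order.TTheory GRing.Theory Num.Theory ComplexField.
Local Open Scope ring_scope.

Section Defs.
Variable R : realType.
Local Notation C := R[i].

Definition bitstring (n : nat) := {ffun 'I_n -> bool}.

Definition is_junta (n k : nat) (f : bitstring n -> bool) : Prop :=
  exists (idx : 'I_k -> 'I_n) (g : {ffun 'I_k -> bool} -> bool),
    forall x : bitstring n, f x = g [ffun t => x (idx t)].

Definition disagree (n : nat) (f g : bitstring n -> bool) : R :=
  #|[set x : bitstring n | f x != g x]|%:R / (2 ^ n)%:R.

Definition far_from_juntas (n k : nat) (f : bitstring n -> bool) (eps : R) : Prop :=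
  forall g : bitstring n -> bool, is_junta k g -> eps <= disagree f g.

(* j-th bit of a basis index x in {0,...,2^n - 1}; qubit j <-> bit j *)
Definition bit (j x : nat) : bool := odd (x %/ 2 ^ j).
Definition bits_of (n : nat) (x : 'I_(2 ^ n)) : bitstring n := [ffun j : 'I_n => bit j x].

Definition Uf (n : nat) (f : bitstring n -> bool) : 'M[C]_(2 ^ n) :=
  \matrix_(x, y) (if x == y then (-1) ^+ f (bits_of x) else 0).

Definition adjoint (m : nat) (A : 'M[C]_m) : 'M[C]_m := (map_mx Num.conj A)^T.
Definition unitary (m : nat) (A : 'M[C]_m) : Prop :=
  A *m adjoint A = 1%:M /\ adjoint A *m A = 1%:M.

(* index in {0,...,2^|S|-1} of the restriction of basis state x to the qubits
   of S (listed in increasing order); the "mod" is a no-op, used only to land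
   in the ordinal type *)
Definition sub_index_nat (n : nat) (S : {set 'I_n}) (x : nat) : nat :=
  \sum_(t < #|S|) bit (nth 0%N (map val (enum S)) t) x * 2 ^ t.

Lemma pow2_gt0 (m : nat) : (0 < 2 ^ m)%N.
Proof. by rewrite expn_gt0. Qed.

Definition sub_index (n : nat) (S : {set 'I_n}) (x : nat) : 'I_(2 ^ #|S|) :=
  Ordinal (ltn_pmod (sub_index_nat S x) (pow2_gt0 #|S|)).

Definition agree_off (n : nat) (S : {set 'I_n}) (x y : nat) : bool :=
  [forall j : 'I_n, (j \notin S) ==> (bit j x == bit j y)].

Definition tensor_id (n : nat) (S : {set 'I_n}) (W : 'M[C]_(2 ^ #|S|)) :
    'M[C]_(2 ^ n) :=
  \matrix_(x, y) (if agree_off S x y then W (sub_index S x) (sub_index S y) else 0).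

Definition quantum_junta (n k : nat) (U : 'M[C]_(2 ^ n)) : Prop :=
  exists (S : {set 'I_n}) (W : 'M[C]_(2 ^ #|S|)),
    #|S| = k /\ unitary W /\ U = tensor_id W.

Definition abs2 (z : C) : R := (complex.Re z) ^+ 2 + (complex.Im z) ^+ 2.
Definition frob (m : nat) (A : 'M[C]_m) : R :=
  Num.sqrt (\sum_(i < m) \sum_(j < m) abs2 (A i j)).

Definition expi (t : R) : C := (cos t +i* sin t)%C.

Definition dist (m : nat) (A B : 'M[C]_m) : R :=
  inf [set (Num.sqrt (2 * m%:R))^-1 * frob (expi t *: A - B) | t in `[0, 2 * pi[%classic].

End Defs.

(* Main.v *)
Require Import Defs.
From HB Require Import structures.
From mathcomp Require Import all_boot all_order all_algebra.
From mathcomp Require Import all_classical all_reals all_analysis.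
From mathcomp Require Import complex.
From mathcomp Require Import ring lra.
Import Order.TTheory GRing.Theory Num.Theory ComplexField.
Local Open Scope ring_scope.
Set Implicit Arguments. Unset Strict Implicit.
Lemma bit_nat_inj (n x y : nat) : (x < 2 ^ n)%N -> (y < 2 ^ n)%N ->
  (forall j, (j < n)%N -> bit j x = bit j y) -> x = y.
Proof.
elim: n x y => [|n IH] x y.
  by rewrite expn0 !ltnS !leqn0 => /eqP -> /eqP ->.
move=> hx hy hb.
have h0 := hb 0%N isT; rewrite /bit expn0 !divn1 in h0.
have hs : (x %/ 2 = y %/ 2)%N.
  apply: IH.
  - by rewrite ltn_divLR // mulnC -expnS.
  - by rewrite ltn_divLR // mulnC -expnS.
  move=> j hj; have := hb j.+1 hj; rewrite /bit expnS !divnMA; exact.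
by rewrite -(odd_double_half x) -(odd_double_half y) h0 -!divn2 hs.
Qed.

Lemma bits_of_inj (n : nat) : injective (@bits_of n).
Proof.
move=> x y /ffunP h; apply/val_inj/(@bit_nat_inj n) => //[||j hj]; last first.
- by have := h (Ordinal hj); rewrite !ffunE.
- exact: ltn_ord.
- exact: ltn_ord.
Qed.
Definition code (m : nat) (y : {ffun 'I_m -> bool}) : 'I_(2 ^ m) :=
  Ordinal (ltn_pmod (\sum_(t < m) y t * 2 ^ t)%N (pow2_gt0 m)).

Definition idx (n : nat) (S : {set 'I_n}) (t : 'I_#|S|) : 'I_n := enum_val t.

Lemma code_sub (n : nat) (S : {set 'I_n}) (x : 'I_(2 ^ n)) :
  code [ffun t : 'I_#|S| => bits_of x (idx t)] = sub_index S x.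
Proof.
apply/val_inj => /=; congr (_ %% _)%N; apply: eq_bigr => t _.
rewrite !ffunE /idx (enum_val_nth (enum_val t)) (nth_map (enum_val t)) //.
by rewrite -cardE.
Qed.

Lemma diag_bound (R : realType) (n : nat) (f : bitstring n -> bool) (S : {set 'I_n})
  (W : 'M[R[i]]_(2 ^ #|S|)) (t0 : R) (x : 'I_(2 ^ n)) :
  let P := fun z : R[i] => complex.Re z * cos t0 + complex.Im z * sin t0 < 0 in
  f (bits_of x) != P (W (sub_index S x) (sub_index S x)) ->
  1 <= abs2 ((expi t0 *: Uf R f - tensor_id W) x x).
Proof.
move=> P; rewrite /P !mxE eqxx /agree_off.
have -> : [forall j : 'I_n, (j \notin S) ==> (bit j x == bit j x)].
  by apply/forallP => j; rewrite eqxx implybT.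
case: (W _ _) => p q; rewrite /expi /abs2 /=.
have h := cos2Dsin2 t0.
case: (f _) => /=; rewrite ?mulr1 ?mulrN1 ?mulr0 ?mul0r.
  case: ltP => //= hc _; rewrite ?oppr0 ?mulr0 ?subr0 ?add0r; nra.
case: ltP => //= hc _; rewrite ?oppr0 ?mulr0 ?subr0 ?add0r; nra.
Qed.

Lemma card_disagree (n : nat) (P : bitstring n -> bool) :
  #|[set b : bitstring n | P b]| = #|[set i : 'I_(2 ^ n) | P (bits_of i)]|.
Proof.
have hb : bijective (@bits_of n).
  apply: inj_card_bij; first exact: bits_of_inj.
  by rewrite card_ffun card_bool !card_ord.
case: hb => h hK Kh.
rewrite -(card_imset _ (@bits_of_inj n)); apply: eq_card => b.
rewrite inE; apply/idP/imsetP.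
  by move=> Pb; exists (h b); rewrite ?inE Kh.
by case=> i; rewrite inE => Pi ->.
Qed.

Theorem mainTheorem3 (R : realType) (n k : nat) (f : bitstring n -> bool) (eps : R) :
  far_from_juntas k f eps ->
  forall V : 'M[R[i]]_(2 ^ n), quantum_junta k V ->
    Num.sqrt (eps / 2) <= dist (Uf R f) V.
Proof.
move=> hfar V [S [W [hk [_ ->]]]]; subst k.
apply: lb_le_inf.
  exists ((Num.sqrt (2 * (2 ^ n)%:R))^-1 * frob (expi 0 *: Uf R f - tensor_id W)).
  exists 0 => //; rewrite /= in_itv /= lexx /=.
  by rewrite mulr_gt0 // pi_gt0.
move=> _ [t0 _ <-].
set P := fun z : R[i] => complex.Re z * cos t0 + complex.Im z * sin t0 < 0.
pose g := fun b : bitstring n =>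
  P (W (code [ffun t => b (idx t)]) (code [ffun t => b (idx t)])).
have hj : is_junta #|S| g by exists (@idx n S); exists (fun y => P (W (code y) (code y))).
have heps := hfar g hj.
set A := expi t0 *: Uf R f - tensor_id W.
set Sig := \sum_(i < 2 ^ n) \sum_(j < 2 ^ n) abs2 (A i j).
have abs2_ge0 : forall z : R[i], 0 <= abs2 z by move=> z; apply: addr_ge0; apply: sqr_ge0.
have hD : #|[set b | f b != g b]|%:R <= Sig.
  rewrite card_disagree.
  apply: (@le_trans _ _ (\sum_(i < 2 ^ n) abs2 (A i i))).
    apply: (@le_trans _ _ (\sum_(i in [set i : 'I_(2 ^ n) | f (bits_of i) != g (bits_of i)]) abs2 (A i i))).
      rewrite -sumr_const; apply: ler_sum => i; rewrite inE => hi.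
      apply: diag_bound; move: hi; by rewrite /g code_sub.
    by rewrite [X in _ <= X](bigID (fun i => i \in [set i : 'I_(2 ^ n) | f (bits_of i) != g (bits_of i)])) /= lerDl sumr_ge0.
  apply: ler_sum => i _.
  by rewrite (bigD1 i) //= lerDl sumr_ge0.
have hN : 0 < (2 ^ n)%:R :> R by rewrite ltr0n expn_gt0.
have hSig : 0 <= Sig by rewrite sumr_ge0 // => i _; rewrite sumr_ge0.
rewrite /frob -/Sig.
case: (lerP eps 0) => he.
  by rewrite ler0_sqrtr ?mulr_ge0 ?invr_ge0 ?sqrtr_ge0 //; lra.
rewrite -sqrtrV ?mulr_ge0 ?ler0n // -sqrtrM ?invr_ge0 ?mulr_ge0 ?ler0n //.
rewrite ler_sqrt ?mulr_ge0 ?invr_ge0 ?mulr_ge0 ?ler0n //.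
have : eps <= Sig / (2 ^ n)%:R.
  apply: (le_trans heps); rewrite /disagree ler_wpM2r // invr_ge0 ltW //.
rewrite invfM.
set y := Sig / _; move=> hy.
have -> : 2^-1 * (2 ^ n)%:R^-1 * Sig = y / 2 by rewrite /y; field; rewrite lt0r_neq0.
lra.
Qed.
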